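(* Let $(X,|\cdot|)$ be a Banach space which is uniformly convex of type $p\geqslant 2$, i.e. there is $c>0$ with $\delta_X(\varepsilon)\geqslant c\,\varepsilon^p$ for all $\varepsilon\in(0,2]$. Let $Y$ be the tree with four vertices $a_0,a_1,a_2,a_2'$ and edges $a_0a_1$, $a_1a_2$, $a_1a_2'$, equipped with its graph (shortest-path) metric $d$. Then there is a constant $K=K(X)>0$ such that for every $D>0$ and every map $\varphi:Y\to X$ that is $D$-Lipschitz (i.e. $|\varphi(x)-\varphi(y)|\leqslant D\,d(x,y)$ for all $x,y\in Y$) and distance non-decreasing (i.e. $|\varphi(x)-\varphi(y)|\geqslant d(x,y)$ for all $x,y\in Y$), either \[|\varphi(a_0)-\varphi(a_2)|\leqslant 2\Big(D-\frac{K}{D^{p-1}}\Big)\] or \[|\varphi(a_0)-\varphi(a_2')|\leqslant 2\Big(D-\frac{K}{D^{p-1}}\Big).\]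
   Context: The modulus of (uniform) convexity of a Banach space $X$ with norm $|\cdot|$ is, for $\varepsilon\in(0,2]$, \[\delta_X(\varepsilon)=\inf\left\{1-\left|\tfrac{x+y}{2}\right| \;:\; |x|=|y|=1,\ |x-y|\geqslant\varepsilon\right\}.\] $X$ is called uniformly convex of type $p\geqslant 2$ if $\delta_X(\varepsilon)\geqslant c\,\varepsilon^p$ for some constant $c>0$ and all $\varepsilon\in(0,2]$. In the tree $Y$, $a_0$ is the root, $a_1$ its unique child, and $a_2,a_2'$ the two children of $a_1$. *)

(* Defs.v *)
From HB Require Import structures.
From mathcomp Require Import all_boot all_order all_algebra.
From mathcomp Require Import all_classical all_reals all_analysis.
Set Implicit Arguments. Unset Strict Implicit. Unset Printing Implicit Defensive.
Import Order.TTheory GRing.Theory Num.Theory.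
Import numFieldNormedType.Exports.
Local Open Scope classical_set_scope.
Local Open Scope ring_scope.

Definition modulus_convexity (R : realType) (X : normedModType R) (eps : R) : R :=
  inf [set t : R | exists x y : X,
         [/\ `|x| = 1, `|y| = 1, eps <= `|x - y| & t = 1 - `|(2%:R)^-1 *: (x + y)|] ].

Definition unif_convex_type (R : realType) (X : normedModType R) (p : R) : Prop :=
  exists c : R, 0 < c /\
    forall eps : R, 0 < eps -> eps <= 2%:R ->
      c * eps `^ p <= modulus_convexity X eps.

Inductive Yv := a0 | a1 | a2 | a2'.

Definition tdist (R : realType) (u v : Yv) : R :=
  match u, v with
  | a0, a0 | a1, a1 | a2, a2 | a2', a2' => 0
  | a0, a1 | a1, a0 | a1, a2 | a2, a1 | a1, a2' | a2', a1 => 1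
  | _, _ => 2%:R
  end.

(* Main.v *)
Require Import Defs.
Set Warnings "-all".
From HB Require Import structures.
From mathcomp Require Import all_boot all_order all_algebra.
From mathcomp Require Import all_classical all_reals all_analysis.
From mathcomp Require Import ring lra.
Import Order.TTheory GRing.Theory Num.Theory.
Import numFieldNormedType.Exports.
Local Open Scope ring_scope.
Set Implicit Arguments. Unset Strict Implicit.

Lemma unit_approx (R : realType) (X : normedModType R) (D : R) (v : X) :
  1 <= D -> 1 <= `|v| -> `|v| <= D ->
  `| `|v|^-1 *: v - D^-1 *: v| = 1 - `|v| / D.
Proof.
move=> D1 v1 vD.
have v0 : `|v| != 0 by apply/eqP => h; rewrite h in v1; lra.
have D0 : D != 0 by apply/eqP => h; rewrite h in D1; lra.
rewrite -scalerBl normrZ ger0_norm; last first.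
  rewrite subr_ge0 lef_pV2 // posrE; lra.
by rewrite mulrBl mulVf // mulrC.
Qed.

Lemma keyA (R : realType) (X : normedModType R) (D t : R) (u v : X) :
  1 <= D -> 1 <= `|u| -> 1 <= `|v| -> `|u| <= D -> `|v| <= D ->
  2%:R * (D - t) < `|u + v| ->
  `| `|v|^-1 *: v - D^-1 *: v| < 2%:R * t / D /\
  1 - `|(2%:R)^-1 *: (`|u|^-1 *: u + `|v|^-1 *: v)| < 3%:R * t / D.
Proof.
move=> D1 u1 v1 uD vD huv.
have D0 : 0 < D by lra.
have Dn0 : D != 0 by apply/eqP => h; lra.
have D0' : 0 <= D by lra.
have Hu := unit_approx D1 u1 uD.
have Hv := unit_approx D1 v1 vD.
have tri : `|u + v| <= `|u| + `|v| := ler_normD _ _.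
have ev : 1 - `|v| / D < 2%:R * t / D.
  have -> : 1 - `|v| / D = (D - `|v|) / D by field; exact: Dn0.
  rewrite ltr_pM2r ?invr_gt0 //; lra.
have eu : 1 - `|u| / D < 2%:R * t / D.
  have -> : 1 - `|u| / D = (D - `|u|) / D by field.
  rewrite ltr_pM2r ?invr_gt0 //; lra.
split; first by rewrite Hv.
set xu := `|u|^-1 *: u; set yv := `|v|^-1 *: v.
have id : D^-1 *: (u + v) = (xu + yv) - (xu - D^-1 *: u) - (yv - D^-1 *: v).
  by rewrite scalerDr !opprB -addrA addrACA !subrKC.
have h1 : `|D^-1 *: (u + v)| <= `|xu + yv| + `|xu - D^-1 *: u| + `|yv - D^-1 *: v|.
  rewrite id; apply: le_trans (ler_normD _ _) _; rewrite normrN lerD2r.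
  apply: le_trans (ler_normD _ _) _; by rewrite normrN.
have h2 : 2%:R - 2%:R * t / D < D^-1 * `|u + v|.
  have -> : 2%:R - 2%:R * t / D = D^-1 * (2%:R * (D - t)) by field; exact: Dn0.
  by rewrite ltr_pM2l ?invr_gt0.
rewrite normrZ ger0_norm ?invr_ge0 ?ler0n // in h1.
rewrite normrZ ger0_norm ?invr_ge0 ?ler0n //.
rewrite Hu Hv in h1.
lra.
Qed.


Lemma keyB (R : realType) (X : normedModType R) (p c K D : R) (w y : X) :
  2%:R <= p -> 0 < c ->
  (forall eps : R, 0 < eps -> eps <= 2%:R -> c * eps `^ p <= modulus_convexity X eps) ->
  1 <= D -> 0 < K -> K * (3%:R * 2%:R `^ p) <= c ->
  `|w| = 1 -> `|y| = 1 -> 1 <= 2%:R * D * `|w - y| ->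
  1 - `|(2%:R)^-1 *: (w + y)| < 3%:R * (K / D `^ (p - 1)) / D -> False.
Proof.
move=> p2 c0 hd D1 K0 Kc w1 y1 e1 hlt.
have D0 : 0 < D by lra.
have Dn0 : D != 0 by apply/eqP => h; lra.
have e0 : 0 < `|w - y|.
  rewrite normr_gt0 subr_eq0; apply/eqP => h; move: e1; rewrite h subrr normr0; lra.
move: e1 e0; set e := `|w - y| => e1 e0.
have e2 : e <= 2%:R by rewrite /e; apply: le_trans (ler_normB _ _) _; rewrite w1 y1.
have hm : modulus_convexity X e <= 1 - `|(2%:R)^-1 *: (w + y)|.
  apply: ge_inf.
    exists 0 => z [x' [y' [hx hy _ ->]]].
    rewrite normrZ ger0_norm ?invr_ge0 ?ler0n // subr_ge0.
    have := ler_normD x' y'; rewrite hx hy => h.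
    rewrite -[leRHS](@divff _ 2%:R) ?pnatr_eq0 //.
    rewrite mulrC ler_pM2r ?invr_gt0 ?ltr0n //; lra.
  by exists w, y; split.
have hc := hd e e0 e2.
set P := D `^ (p - 1).
set E := e `^ p.
set Q := 2%:R `^ p.
have P0 : 0 < P by rewrite /P powR_gt0.
have Q0 : 0 < Q by rewrite /Q powR_gt0 ?ltr0n.
have E0 : 0 < E by rewrite /E powR_gt0.
have hDp : D `^ p = P * D.
  by rewrite /P -{3}(powRr1 (ltW D0)) -powRD ?subrK // Dn0 implybT.
have h1 : 1 <= Q * (P * D) * E.
  rewrite -hDp /Q /E -!powRM ?mulr_ge0 ?ler0n ?(ltW D0) ?(ltW e0) //.
  apply: (@le_trans _ _ (1 `^ p)); first by rewrite powR1.
  apply: ge0_ler_powR; rewrite ?nnegrE ?mulr_ge0 ?ler0n ?(ltW D0) ?(ltW e0) //; lra.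
have h2 : c * E * (P * D) < 3%:R * K.
  have := le_lt_trans (le_trans hc hm) hlt.
  have -> : 3%:R * (K / P) / D = (3%:R * K) / (P * D) by field; rewrite Dn0 (gt_eqF P0).
  rewrite ltr_pdivlMr ?mulr_gt0 //.
have h3 : c <= c * (Q * (P * D) * E) by rewrite ler_peMr // ltW.
have h4 : Q * (c * E * (P * D)) < Q * (3%:R * K) by rewrite ltr_pM2l.
have e5 : c * (Q * (P * D) * E) = Q * (c * E * (P * D)) by ring.
have e6 : Q * (3%:R * K) = K * (3%:R * Q) by ring.
rewrite e5 in h3; rewrite e6 in h4.
have := le_lt_trans h3 (lt_le_trans h4 Kc); rewrite ltxx.
by [].
Qed.

Lemma zid (V : zmodType) (a b c d e : V) : d - e = ((a - c) - (a - b)) - (b - d) + (c - e).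
Proof.
by rewrite !opprB (addrC (a - c)) subrKA (addrC (b - c)) !subrKA.
Qed.

Theorem lemma1 (R : realType) (X : completeNormedModType R) (p : R) :
  2%:R <= p -> unif_convex_type X p ->
  exists K : R, 0 < K /\
    forall (D : R) (phi : Yv -> X), 0 < D ->
      (forall x y : Yv, `|phi x - phi y| <= D * tdist R x y) ->
      (forall x y : Yv, tdist R x y <= `|phi x - phi y|) ->
      `|phi a0 - phi a2| <= 2%:R * (D - K / D `^ (p - 1)) \/
      `|phi a0 - phi a2'| <= 2%:R * (D - K / D `^ (p - 1)).
Proof.
move=> p2 [c [c0 hd]].
have Q0 : 0 < 2%:R `^ p by rewrite powR_gt0 ?ltr0n.
set K := Num.min (4%:R^-1) (c / (3%:R * 2%:R `^ p)).
have K0 : 0 < K by rewrite lt_min invr_gt0 ltr0n /= divr_gt0 // mulr_gt0 ?ltr0n.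
have K4 : K <= 4%:R^-1 by rewrite ge_min lexx.
have Kc : K * (3%:R * 2%:R `^ p) <= c.
  rewrite -ler_pdivlMr ?mulr_gt0 ?ltr0n //.
  by rewrite ge_min lexx orbT.
exists K; split => // D phi D0 Lip Dist.
set u := phi a1 - phi a0.
set v := phi a2 - phi a1.
set v' := phi a2' - phi a1.
have u1 : 1 <= `|u| by have := Dist a1 a0.
have uD : `|u| <= D by have := Lip a1 a0; rewrite /= mulr1.
have v1 : 1 <= `|v| by have := Dist a2 a1.
have vD : `|v| <= D by have := Lip a2 a1; rewrite /= mulr1.
have v1' : 1 <= `|v'| by have := Dist a2' a1.
have vD' : `|v'| <= D by have := Lip a2' a1; rewrite /= mulr1.
have D1 : 1 <= D by apply: le_trans u1 uD.
have Dn0 : D != 0 by apply/eqP => h; lra.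
have euv : `|phi a0 - phi a2| = `|u + v|.
  by rewrite distrC /u /v [in RHS]addrC addrA subrK.
have euv' : `|phi a0 - phi a2'| = `|u + v'|.
  by rewrite distrC /u /v' [in RHS]addrC addrA subrK.
have vv : 2%:R <= `|v - v'|.
  have -> : v - v' = phi a2 - phi a2' by rewrite /v /v' opprB addrA subrK.
  by have := Dist a2 a2'.
set P := D `^ (p - 1).
have P1 : 1 <= P.
  apply: (@le_trans _ _ (D `^ 0)); first by rewrite powRr0.
  rewrite /P ler_powR //; lra.
set t := K / P.
have t0 : 0 <= t by rewrite /t divr_ge0 // ltW // (lt_le_trans _ P1).
have t4 : t <= 4%:R^-1.
  apply: le_trans K4; rewrite /t ler_pdivrMr ?(lt_le_trans _ P1) //.
  by rewrite ler_peMr // ltW.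
rewrite euv euv'.
case: (lerP `|u + v| (2%:R * (D - t))) => h1; first by left.
case: (lerP `|u + v'| (2%:R * (D - t))) => h2; first by right.
exfalso.
have [ev hv] := keyA D1 u1 v1 uD vD h1.
have [ev' hv'] := keyA D1 u1 v1' uD vD' h2.
move: ev hv ev' hv'.
set xu := `|u|^-1 *: u; set yv := `|v|^-1 *: v; set yv' := `|v'|^-1 *: v'.
move=> ev hv ev' hv'.
have nx : forall w : X, 1 <= `|w| -> `| `|w|^-1 *: w| = 1.
  move=> w w1; rewrite normrZ ger0_norm ?invr_ge0 // mulVf //.
  by apply/eqP => h; rewrite h in w1; lra.
have id2 : D^-1 *: (v - v') = ((xu - yv') - (xu - yv)) - (yv - D^-1 *: v) + (yv' - D^-1 *: v').
  by rewrite scalerBr; apply: zid.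
have D0' : 0 <= D^-1 by rewrite invr_ge0 ltW.
have h3 : D^-1 * `|v - v'| <= `|xu - yv'| + `|xu - yv| + `|yv - D^-1 *: v| + `|yv' - D^-1 *: v'|.
  have -> : D^-1 * `|v - v'| = `|D^-1 *: (v - v')| by rewrite normrZ ger0_norm.
  rewrite id2.
  apply: le_trans (ler_normD _ _) _; rewrite lerD2r.
  apply: le_trans (ler_normB _ _) _; rewrite lerD2r; exact: ler_normB.
have h4 : D^-1 * 2%:R <= D^-1 * `|v - v'| by rewrite ler_wpM2l.
move: h3; set e1 := `|xu - yv|; set e2 := `|xu - yv'| => h3.
have h5 : D^-1 * 2%:R < e2 + e1 + 4%:R * t / D by lra.
have h6 : 2%:R < D * e2 + D * e1 + 4%:R * t.
  have : D * (D^-1 * 2%:R) < D * (e2 + e1 + 4%:R * t / D) by rewrite ltr_pM2l.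
  have -> : D * (D^-1 * 2%:R) = 2%:R by field.
  have -> : D * (e2 + e1 + 4%:R * t / D) = D * e2 + D * e1 + 4%:R * t by field.
  done.
have nxu : `|xu| = 1 by apply: nx.
have nyv : `|yv| = 1 by apply: nx.
have nyv' : `|yv'| = 1 by apply: nx.
case: (lerP 1 (2%:R * D * e1)) => h7.
  by apply: (keyB p2 c0 hd D1 K0 Kc nxu nyv h7).
have h8 : 1 <= 2%:R * D * e2 by lra.
by apply: (keyB p2 c0 hd D1 K0 Kc nxu nyv' h8).
Qed.
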